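(* Let $\mathcal{U}\subseteq\mathbb{R}^n$ be a domain and $F=u\,\phi(r,s)$ a spherically symmetric Finsler metric on $\mathcal{U}$, where $u=|y|$, $r=|x|$, $s=\langle x,y\rangle/|y|$ and $\phi$ is smooth. Put $\sigma_1=\phi-s\phi_s$ and $\rho=\phi\,[\sigma_1+(r^2-s^2)\phi_{ss}]$. Then the norm of the mean Cartan torsion of $F$ is $$\|\mathbf{I}\|=\left|\frac{(n+1)(\sigma_1\phi_s-s\phi\phi_{ss})(\sigma_1+(r^2-s^2)\phi_{ss})+(r^2-s^2)(\sigma_1\phi_{sss}+3s\phi_{ss}^2)\phi}{2u\,\sigma_1\,\rho}\right|\sqrt{\frac{r^2-s^2}{\rho}}.$$
   Context: Here $|\cdot|$, $\langle\cdot,\cdot\rangle$ are the Euclidean norm and inner product on $\mathbb{R}^n$; subscripts $s$ denote partial derivatives in $s$. For a Finsler metric $F$: $g_{ij}=\tfrac12(F^2)_{y^iy^j}$, $(g^{ij})$ its inverse, $C_{ijk}=\tfrac12\partial g_{ij}/\partial y^k$, mean Cartan torsion $I_i=g^{jk}C_{ijk}$, and $\|\mathbf{I}\|^2=g^{ij}I_iI_j$. *)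

(* Defs.v *)
From mathcomp Require Import all_boot all_order all_algebra.
From mathcomp Require Import all_classical all_reals all_analysis.
Set Implicit Arguments. Unset Strict Implicit. Unset Printing Implicit Defensive.
Import Order.TTheory GRing.Theory Num.Theory.
Import numFieldNormedType.Exports.
Local Open Scope classical_set_scope.
Local Open Scope ring_scope.

Fixpoint iterD (R : realType) (V : normedModType R) (vs : seq V) (f : V -> R)
  : V -> R :=
  match vs with
  | [::] => f
  | v :: vs' => fun p => 'D_v (iterD vs' f) p
  end.

Definition smooth_on (R : realType) (V : normedModType R) (D : set V)
    (f : V -> R) : Prop :=
  open D /\
  forall (vs : seq V) (p : V), D p ->
    (forall v : V, derivable (iterD vs f) p v) /\
    {for p, continuous (iterD vs f)}.

Definition dotv (R : realType) (n : nat) (x y : 'rV[R]_n) : R :=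
  \sum_(i < n) x ord0 i * y ord0 i.
Definition enorm (R : realType) (n : nat) (x : 'rV[R]_n) : R :=
  Num.sqrt (dotv x x).
Definition ebasis (R : realType) (n : nat) (i : 'I_n) : 'rV[R]_n :=
  delta_mx ord0 i.

Section Finsler.
Variables (R : realType) (n : nat) (F : 'rV[R]_n -> 'rV[R]_n -> R).

Definition dy (i : 'I_n) (f : 'rV[R]_n -> R) (y : 'rV[R]_n) : R :=
  'D_(ebasis R i) f y.

Definition fund_tensor (x y : 'rV[R]_n) (i j : 'I_n) : R :=
  2^-1 * dy j (dy i (fun w => F x w ^+ 2)) y.

Definition gmat (x y : 'rV[R]_n) : 'M[R]_n :=
  \matrix_(i, j) fund_tensor x y i j.

Definition ginv (x y : 'rV[R]_n) : 'M[R]_n := invmx (gmat x y).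

Definition cartan (x y : 'rV[R]_n) (i j k : 'I_n) : R :=
  2^-1 * dy k (fun w => fund_tensor x w i j) y.

Definition mean_cartan (x y : 'rV[R]_n) (i : 'I_n) : R :=
  \sum_(j < n) \sum_(k < n) ginv x y j k * cartan x y i j k.

Definition norm_mean_cartan (x y : 'rV[R]_n) : R :=
  Num.sqrt (\sum_(i < n) \sum_(j < n)
              ginv x y i j * mean_cartan x y i * mean_cartan x y j).
End Finsler.

Definition domain (R : realType) (n : nat) (U : set 'rV[R]_n) : Prop :=
  open U /\ connected U /\ U !=set0.

Definition finsler_metric (R : realType) (n : nat) (U : set 'rV[R]_n)
    (F : 'rV[R]_n -> 'rV[R]_n -> R) : Prop :=
  smooth_on [set p : 'rV[R]_n * 'rV[R]_n | U p.1 /\ p.2 != 0]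
            (fun p => F p.1 p.2) /\
  (forall x y, U x -> y != 0 -> 0 < F x y) /\
  (forall x y (l : R), U x -> y != 0 -> 0 < l -> F x (l *: y) = l * F x y) /\
  (forall x y (v : 'rV[R]_n), U x -> y != 0 -> v != 0 ->
     0 < \sum_(i < n) \sum_(j < n) fund_tensor F x y i j * v ord0 i * v ord0 j).

Definition sph_metric (R : realType) (n : nat) (phi : R -> R -> R)
    (x y : 'rV[R]_n) : R :=
  enorm y * phi (enorm x) (dotv x y / enorm y).

Definition phi_s (R : realType) (phi : R -> R -> R) (r s : R) : R :=
  derive1 (fun t => phi r t) s.
Definition phi_ss (R : realType) (phi : R -> R -> R) (r s : R) : R :=
  derive1 (fun t => phi_s phi r t) s.
Definition phi_sss (R : realType) (phi : R -> R -> R) (r s : R) : R :=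
  derive1 (fun t => phi_ss phi r t) s.

(* Main.v *)
Require Import Defs.
From mathcomp Require Import all_boot all_order all_algebra.
From mathcomp Require Import all_classical all_reals all_analysis.
From mathcomp Require Import ring lra.
Import Order.TTheory GRing.Theory Num.Theory.
Import numFieldNormedType.Exports.
Local Open Scope classical_set_scope.
Local Open Scope ring_scope.

Set Implicit Arguments. Unset Strict Implicit. Unset Printing Implicit Defensive.

Section Dot.
Variables (R : realType) (n : nat).
Implicit Types (p q w v z : 'rV[R]_n).

Lemma dotvC p q : dotv p q = dotv q p.
Proof. by apply: eq_bigr => i _; rewrite mulrC. Qed.

Lemma dotvDl p q w : dotv (p + q) w = dotv p w + dotv q w.
Proof. by rewrite /dotv -big_split; apply: eq_bigr => i _; rewrite !mxE mulrDl. Qed.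

Lemma dotvDr p q w : dotv w (p + q) = dotv w p + dotv w q.
Proof. by rewrite dotvC dotvDl !(dotvC w). Qed.

Lemma dotvZl (c : R) p q : dotv (c *: p) q = c * dotv p q.
Proof. by rewrite /dotv mulr_sumr; apply: eq_bigr => i _; rewrite !mxE mulrA. Qed.

Lemma dotvZr (c : R) p q : dotv p (c *: q) = c * dotv p q.
Proof. by rewrite dotvC dotvZl dotvC. Qed.

Lemma dotvNl p q : dotv (- p) q = - dotv p q.
Proof. by rewrite -scaleN1r dotvZl mulN1r. Qed.

Lemma dotvNr p q : dotv p (- q) = - dotv p q.
Proof. by rewrite -scaleN1r dotvZr mulN1r. Qed.

Lemma dotvBl p q w : dotv (p - q) w = dotv p w - dotv q w.
Proof. by rewrite dotvDl dotvNl. Qed.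

Lemma dotvBr p q w : dotv w (p - q) = dotv w p - dotv w q.
Proof. by rewrite dotvDr dotvNr. Qed.

Lemma dotv0l p : dotv 0 p = 0.
Proof. by rewrite /dotv big1 // => i _; rewrite mxE mul0r. Qed.

Lemma dotv0r p : dotv p 0 = 0.
Proof. by rewrite dotvC dotv0l. Qed.

Lemma dotv_ge0 p : 0 <= dotv p p.
Proof. by apply: sumr_ge0 => i _; rewrite -expr2 sqr_ge0. Qed.

Lemma dotv_eq0 p : dotv p p = 0 -> p = 0.
Proof.
move=> /eqP; rewrite psumr_eq0; last by move=> i _; rewrite -expr2 sqr_ge0.
move=> /allP H; apply/rowP => i; rewrite mxE.
have /H : i \in index_enum 'I_n by rewrite mem_index_enum.
by rewrite implyTb -expr2 sqrf_eq0 => /eqP.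
Qed.

Lemma enorm_sqr p : enorm p ^+ 2 = dotv p p.
Proof. by rewrite /enorm sqr_sqrtr // dotv_ge0. Qed.

Lemma enorm_ge0 p : 0 <= enorm p.
Proof. exact: sqrtr_ge0. Qed.

Lemma enorm_gt0 p : p != 0 -> 0 < enorm p.
Proof.
move=> p0; rewrite /enorm sqrtr_gt0 lt_def dotv_ge0 andbT.
by apply/eqP => /dotv_eq0 /eqP; rewrite (negbTE p0).
Qed.

Lemma dotv_ebr p i : dotv p (ebasis R i) = p ord0 i.
Proof.
rewrite /dotv (bigD1 i) //= big1 ?addr0.
  by rewrite /ebasis mxE !eqxx /= mulr1.
by move=> j ji; rewrite /ebasis mxE (negbTE ji) andbF mulr0.
Qed.

Lemma dotv_ebl p i : dotv (ebasis R i) p = p ord0 i.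
Proof. by rewrite dotvC dotv_ebr. Qed.

Lemma sum_eb p q : \sum_(j < n) dotv p (ebasis R j) * dotv (ebasis R j) q = dotv p q.
Proof. by apply: eq_bigr => j _; rewrite dotv_ebr dotv_ebl. Qed.

Lemma sum_eb_trace : \sum_(j < n) dotv (ebasis R j) (ebasis R j) = n%:R.
Proof.
rewrite (eq_bigr (fun _ => 1)); last by move=> j _; rewrite dotv_ebr /ebasis mxE !eqxx.
by rewrite sumr_const card_ord.
Qed.

End Dot.
Lemma dotv_gt0 (R : realType) (n : nat) (p : 'rV[R]_n) : p != 0 -> 0 < dotv p p.
Proof.
move=> p0; rewrite lt_def dotv_ge0 andbT.
by apply/eqP => /dotv_eq0 /eqP; rewrite (negbTE p0).
Qed.

Section Calc.
Variables (R : realType) (V : normedModType R).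
Implicit Types (f g : V -> R) (x v : V).

Lemma isd_ext f g x v d d' : (forall w, f w = g w) -> d = d' ->
  is_derive x v f d -> is_derive x v g d'.
Proof. by move=> fg <-; have -> : f = g by apply/funext. Qed.

Lemma isdC (c : R) x v : is_derive x v (fun _ => c) 0.
Proof. exact: is_derive_cst. Qed.

Lemma isdD f g x v df dg : is_derive x v f df -> is_derive x v g dg ->
  is_derive x v (fun w => f w + g w) (df + dg).
Proof. by move=> H1 H2; have := is_deriveD H1 H2. Qed.

Lemma isdN f x v df : is_derive x v f df ->
  is_derive x v (fun w => - f w) (- df).
Proof. by move=> H1; have := is_deriveN H1. Qed.

Lemma isdB f g x v df dg : is_derive x v f df -> is_derive x v g dg ->
  is_derive x v (fun w => f w - g w) (df - dg).
Proof. by move=> H1 H2; have := is_deriveB H1 H2. Qed.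

Lemma isdM f g x v df dg : is_derive x v f df -> is_derive x v g dg ->
  is_derive x v (fun w => f w * g w) (f x * dg + g x * df).
Proof. by move=> H1 H2; have := is_deriveM H1 H2. Qed.

Lemma isdV f x v df : f x != 0 -> is_derive x v f df ->
  is_derive x v (fun w => (f w)^-1) (- (f x)^-2 * df).
Proof.
move=> fx0 H; apply: DeriveDef.
  by apply: derivableV => //; case: H.
by rewrite deriveV //; case: H => _ ->.
Qed.

Lemma derive_line f x v :
  'D_v f x = 'D_1 (fun h : R => f (h *: v + x)) 0.
Proof.
rewrite /derive.
have -> : (fun h : R => h^-1 *: ((f \o shift x) (h *: v) - f x)) =
  (fun h : R => h^-1 *: (((fun h0 : R => f (h0 *: v + x)) \o shift 0) h%:A - f (0 *: v + x))).
  by apply/funext => h /=; rewrite addr0 scale0r add0r [_%:A]mulr1.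
by [].
Qed.

Lemma isd_comp (chi : R -> R) f x v c d :
  is_derive (f x) 1 chi c -> is_derive x v f d ->
  is_derive x v (fun w => chi (f w)) (c * d).
Proof.
move=> Hc [Hf Hd].
have Hg : is_derive (0:R) 1 (fun h : R => f (h *: v + x)) d.
  apply: DeriveDef; first by have /derivable1P := Hf.
  by rewrite -derive_line.
have Hc' : is_derive ((fun h : R => f (h *: v + x)) 0) 1 chi c.
  by rewrite /= scale0r add0r.
case: (is_derive1_comp Hc' Hg) => H1 H2.
apply: DeriveDef.
  by apply/derivable1P; move: H1; rewrite /comp.
by rewrite derive_line; rewrite -H2.
Qed.

End Calc.

Section CalcRV.
Variables (R : realType) (n : nat).
Implicit Types (p w v : 'rV[R]_n).

Lemma isd_lin (f : 'rV[R]_n -> R) w v c :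
  (forall h : R, f (h *: v + w) = f w + h * c) -> is_derive w v f c.
Proof.
move=> H.
have E : (fun h : R => h^-1 *: ((f \o shift w) (h *: v) - f w)) =1
    (fun h => if h == 0 then 0 else c).
  move=> h /=; rewrite H addrC addKr; case: eqP => [->|/eqP h0].
    by rewrite invr0 scale0r.
  by rewrite [_ *: _]mulrA mulVf // mul1r.
have C : (fun h : R => h^-1 *: ((f \o shift w) (h *: v) - f w)) @ 0^' --> c.
  apply: cvg_near_cst.
  by apply: filterS (@nbhs_dnbhs_neq R 0) => h /= h0; rewrite E (negbTE h0).
constructor; first by apply/cvg_ex; exists c.
exact: cvg_lim C.
Qed.

Lemma isd_dot p w v : is_derive w v (fun z => dotv p z) (dotv p v).
Proof.
by apply: isd_lin => h; rewrite dotvDr dotvZr addrC.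
Qed.

Lemma isd_quad (f : 'rV[R]_n -> R) w v c e :
  (forall h : R, f (h *: v + w) = f w + h * c + h ^+ 2 * e) -> is_derive w v f c.
Proof.
move=> H.
have E : (fun h : R => h^-1 *: ((f \o shift w) (h *: v) - f w)) =1
    (fun h => if h == 0 then 0 else c + h * e).
  move=> h /=; rewrite H; case: eqP => [->|/eqP h0].
    by rewrite invr0 scale0r.
  change (h^-1 * (f w + h * c + h ^+ 2 * e - f w) = c + h * e); field; exact: h0.
have L : (fun h : R => c + h * e) @ 0^' --> c.
  have H1 : (fun h : R => h) @ 0^' --> (0:R) by apply: cvg_within.
  have FF := @dnbhs_filter R 0.
  have := cvgD (cvg_cst c) (cvgM H1 (cvg_cst e)).
  by move/(_ FF FF FF FF); rewrite mul0r addr0.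
have C : (fun h : R => h^-1 *: ((f \o shift w) (h *: v) - f w)) @ 0^' --> c.
  apply: (cvg_trans _ L); apply: near_eq_cvg.
  by apply: filterS (@nbhs_dnbhs_neq R 0) => h /= h0; rewrite E (negbTE h0).
constructor; first by apply/cvg_ex; exists c.
exact: cvg_lim C.
Qed.

Lemma isd_dot2 w v : is_derive w v (fun z => dotv z z) (2 * dotv w v).
Proof.
apply: (@isd_quad _ _ _ _ (dotv v v)) => h.
rewrite !dotvDl !dotvDr !dotvZl !dotvZr (dotvC v w); ring.
Qed.

End CalcRV.

Section Sym.
Variables (R : realType) (n : nat) (x : 'rV[R]_n) (psi : nat -> R -> R).

Definition sf (w : 'rV[R]_n) : R := dotv x w / enorm w.

Hypothesis Hpsi : forall k w, w != 0 -> is_derive (sf w) 1 (psi k) (psi k.+1 (sf w)).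

Lemma isd_eq (f : 'rV[R]_n -> R) w v d d' : is_derive w v f d -> d = d' -> is_derive w v f d'.
Proof. by move=> H <-. Qed.

Lemma isd_dotl p w v : is_derive w v (fun z : 'rV[R]_n => dotv z p) (dotv p v).
Proof. by apply: (isd_ext (f := fun z => dotv p z)) (isd_dot p w v) => [z|]; rewrite dotvC. Qed.

Lemma isd_enorm w v : w != 0 -> is_derive w v (fun z : 'rV[R]_n => enorm z) (dotv w v / enorm w).
Proof.
move=> w0.
have H := isd_comp (f := fun z => dotv z z) (is_derive1_sqrt (dotv_gt0 w0)) (isd_dot2 w v).
apply: isd_eq H _; rewrite /enorm; field.
by rewrite gt_eqF // sqrtr_gt0 dotv_gt0.
Qed.


Lemma isd_sf w v : w != 0 -> is_derive w v (fun z => sf z)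
   ((dotv x v - sf w * dotv w v / enorm w) / enorm w).
Proof.
move=> w0; have e0 : enorm w != 0 by rewrite gt_eqF // enorm_gt0.
rewrite /sf; eapply isd_eq.
  eapply isdM; first exact: isd_dot.
  eapply isdV; first exact: e0.
  exact: isd_enorm.
by cbv beta; field.
Qed.

Lemma isd_psi k w v : w != 0 -> is_derive w v (fun z => psi k (sf z))
   (psi k.+1 (sf w) * ((dotv x v - sf w * dotv w v / enorm w) / enorm w)).
Proof. by move=> w0; apply: isd_comp (Hpsi k w0) (isd_sf v w0). Qed.

Ltac dstep :=
  match goal with
  | |- is_derive _ _ (fun _ => ?c) _ => apply: isdC
  | |- _ != 0 => assumption
  | |- is_derive _ _ (fun z => dotv ?p z) _ => apply: isd_dot
  | |- is_derive _ _ (fun z => dotv z ?p) _ => apply: isd_dotl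
  | |- is_derive _ _ (fun z => enorm z) _ => apply: isd_enorm
  | |- is_derive _ _ (fun z => sf z) _ => apply: isd_sf
  | |- is_derive _ _ (fun z => psi ?k (sf z)) _ => apply: isd_psi
  | |- is_derive _ _ (fun z => @?A z + @?B z) _ => eapply (@isdD _ _ A B)
  | |- is_derive _ _ (fun z => - @?A z) _ => eapply (@isdN _ _ A)
  | |- is_derive _ _ (fun z => @?A z * @?B z) _ => eapply (@isdM _ _ A B)
  | |- is_derive _ _ (fun z => (@?A z)^-1) _ => eapply (@isdV _ _ A)
  end.

Ltac dtac := repeat dstep.

Definition F2 (w : 'rV[R]_n) := enorm w * psi 0 (sf w) * (enorm w * psi 0 (sf w)).

Definition H1 w v := 2 * (psi 0 (sf w) * (psi 0 (sf w) - sf w * psi 1 (sf w)) * dotv w v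
   + psi 0 (sf w) * psi 1 (sf w) * enorm w * dotv x v).

Lemma isd_F2 w v : w != 0 -> is_derive w v F2 (H1 w v).
Proof.
move=> w0; have e0 : enorm w != 0 by rewrite gt_eqF // enorm_gt0.
rewrite /F2; eapply isd_eq; first by dtac.
by rewrite /H1 /=; field.
Qed.

Definition G w v z :=
  let u := enorm w in let s := sf w in
  let p0 := psi 0 s in let p1 := psi 1 s in let p2 := psi 2 s in
  let P := p0 * (p0 - s * p1) in let Q := p0 * p1 in
  let P' := p1 * (p0 - s * p1) - s * p0 * p2 in
  let Q' := p1 * p1 + p0 * p2 in
  let Mz := dotv x z - s * dotv w z / u in
  P * dotv v z + P' * Mz * dotv w v / u + Q' * Mz * dotv x v + Q * dotv w z * dotv x v / u.

Lemma isd_H1 w v z : w != 0 -> is_derive w z (fun w => H1 w v) (2 * G w v z).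
Proof.
move=> w0; have e0 : enorm w != 0 by rewrite gt_eqF // enorm_gt0.
rewrite /H1; eapply isd_eq; first by dtac.
by rewrite /G /=; field.
Qed.

Definition C3 w v z t :=
  let u := enorm w in let s := sf w in
  let p0 := psi 0 s in let p1 := psi 1 s in let p2 := psi 2 s in let p3 := psi 3 s in
  let P' := p1 * (p0 - s * p1) - s * p0 * p2 in
  let Q'' := 3 * p1 * p2 + p0 * p3 in
  let M y := dotv x y - s * dotv w y / u in
  let h y y' := dotv y y' - dotv w y * dotv w y' / (u * u) in
  (2 * u)^-1 * (P' * (h v z * M t + h z t * M v + h v t * M z) + Q'' * M v * M z * M t).

Lemma isd_G w v z t : w != 0 -> is_derive w t (fun w => G w v z) (2 * C3 w v z t).
Proof.
move=> w0; have e0 : enorm w != 0 by rewrite gt_eqF // enorm_gt0.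
rewrite /G; eapply isd_eq; first by dtac.
by rewrite /C3 /=; field.
Qed.

End Sym.

Section E2.
Variables (R : realType).

Definition e2 : R * R := (0, 1).

Lemma shift_e2 (r t h : R) : h *: e2 + (r, t) = (r, h + t).
Proof. by rewrite /e2; apply/pair_equal_spec; split => /=; rewrite ?scaler0 ?add0r // [_ *: _]mulr1. Qed.

Lemma derive_e2 (g : R * R -> R) (r t : R) :
  'D_e2 g (r, t) = 'D_1 (fun t => g (r, t)) t.
Proof.
rewrite /derive.
have -> : (fun h : R => h^-1 *: ((g \o shift (r, t)) (h *: e2) - g (r, t))) =
  (fun h : R => h^-1 *: (((fun t0 : R => g (r, t0)) \o shift t) (h *: 1) - g (r, t))).
  by apply/funext => h /=; rewrite shift_e2 [_ *: 1]mulr1.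
by [].
Qed.

Lemma derivable_e2 (g : R * R -> R) (r t : R) :
  derivable g (r, t) e2 -> derivable (fun t => g (r, t)) t 1.
Proof.
rewrite /derivable.
have -> : (fun h : R => h^-1 *: ((g \o shift (r, t)) (h *: e2) - g (r, t))) =
  (fun h : R => h^-1 *: (((fun t0 : R => g (r, t0)) \o shift t) (h *: 1) - g (r, t))).
  by apply/funext => h /=; rewrite shift_e2 [_ *: 1]mulr1.
by [].
Qed.

End E2.

Lemma near_neq0 (R : realType) (n : nat) (y : 'rV[R]_n) : y != 0 -> \forall w \near y, w != 0.
Proof.
move=> y0; apply/nbhs_ballP; exists `|y|; first by rewrite /= normr_gt0.
move=> w /= yw; apply/eqP => w0; move: yw; rewrite w0 -ball_normE /ball_ /= subr0 ltxx.
by [].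
Qed.

Lemma isd_val (R : realType) (V : normedModType R) (f : V -> R) a v df :
  is_derive a v f df -> 'D_v f a = df.
Proof. by case. Qed.

Section Conn.
Variables (R : realType) (n : nat) (phi : R -> R -> R) (x : 'rV[R]_n) (D : set (R * R)).
Hypothesis Hsm : smooth_on D (fun p : R * R => phi p.1 p.2).
Hypothesis HD : forall w : 'rV[R]_n, w != 0 -> D (enorm x, dotv x w / enorm w).

Definition psiF k t := Defs.iterD (nseq k (@e2 R)) (fun p : R * R => phi p.1 p.2) (enorm x, t).

Lemma iterD_cons (v : R * R) vs (f : R * R -> R) p :
  Defs.iterD (v :: vs) f p = 'D_v (Defs.iterD vs f) p.
Proof. by []. Qed.

Lemma psiF_S k t : psiF k.+1 t = derive1 (psiF k) t.
Proof. by rewrite derive1E /psiF -[nseq k.+1 _]/(_ :: _) iterD_cons derive_e2. Qed.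

Lemma psiF0 t : phi (enorm x) t = psiF 0 t.
Proof. reflexivity. Qed.

Lemma psiF1 t : phi_s phi (enorm x) t = psiF 1 t.
Proof.
rewrite psiF_S /phi_s.
have -> : psiF 0 = phi (enorm x) by apply/funext => t'; reflexivity.
reflexivity.
Qed.

Lemma psiF2 t : phi_ss phi (enorm x) t = psiF 2 t.
Proof.
rewrite psiF_S /phi_ss.
have -> : psiF 1 = phi_s phi (enorm x) by apply/funext => t'; rewrite psiF1.
reflexivity.
Qed.

Lemma psiF3 t : phi_sss phi (enorm x) t = psiF 3 t.
Proof.
rewrite psiF_S /phi_sss.
have -> : psiF 2 = phi_ss phi (enorm x) by apply/funext => t'; rewrite psiF2.
reflexivity.
Qed.


Lemma Hpsi k w : w != 0 -> is_derive (sf x w) 1 (psiF k) (psiF k.+1 (sf x w)).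
Proof.
move=> w0; have [Hd _] := Hsm.2 (nseq k (@e2 R)) _ (HD w0).
have H := derivable_e2 (Hd (@e2 R)).
apply: DeriveDef; first exact: H.
by rewrite psiF_S derive1E.
Qed.

Lemma F2_eq w : sph_metric phi x w ^+ 2 = F2 x psiF w.
Proof. by rewrite /F2 /sph_metric expr2. Qed.

Lemma dyF2 w i : w != 0 ->
  dy i (fun w => sph_metric phi x w ^+ 2) w = H1 x psiF w (ebasis R i).
Proof.
move=> w0; rewrite /dy.
have -> : (fun w => sph_metric phi x w ^+ 2) = F2 x psiF by apply/funext => w'; exact: F2_eq.
by rewrite (isd_val (isd_F2 Hpsi (ebasis R i) w0)).
Qed.

Lemma fund_eq w i j : w != 0 ->
  fund_tensor (sph_metric phi) x w i j = G x psiF w (ebasis R i) (ebasis R j).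
Proof.
move=> w0; rewrite /fund_tensor /dy.
have E : \forall w' \near w, 'D_(ebasis R i) (fun w => sph_metric phi x w ^+ 2) w'
   = H1 x psiF w' (ebasis R i).
  by apply: filterS (near_neq0 w0) => w' w'0; exact: dyF2.
rewrite (near_eq_derive _ E) (isd_val (isd_H1 Hpsi (ebasis R i) (ebasis R j) w0)).
by rewrite mulrA mulVf ?mul1r // pnatr_eq0.
Qed.

Lemma cartan_eq y i j k : y != 0 ->
  cartan (sph_metric phi) x y i j k = C3 x psiF y (ebasis R i) (ebasis R j) (ebasis R k).
Proof.
move=> y0; rewrite /cartan /dy.
have E : \forall w' \near y, fund_tensor (sph_metric phi) x w' i j
   = G x psiF w' (ebasis R i) (ebasis R j).
  by apply: filterS (near_neq0 y0) => w' w'0; exact: fund_eq.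
rewrite (near_eq_derive _ E).
rewrite (isd_val (isd_G Hpsi (ebasis R i) (ebasis R j) (ebasis R k) y0)).
by rewrite mulrA mulVf ?mul1r // pnatr_eq0.
Qed.

End Conn.

Lemma sum_eb' (R : realType) (n : nat) (p q : 'rV[R]_n) :
  \sum_(j < n) dotv p (ebasis R j) * dotv q (ebasis R j) = dotv p q.
Proof. by rewrite -sum_eb; apply: eq_bigr => j _; rewrite (dotvC q). Qed.

Lemma trace3 (R : realType) (n : nat) (S : 'rV[R]_n -> 'rV[R]_n)
  (Ssym : forall p q, dotv (S p) q = dotv p (S q)) (c : R) (p1 q1 p2 q2 p3 q3 : 'rV[R]_n) :
  \sum_(j < n) dotv (S (ebasis R j)) (c *: ebasis R j + dotv p1 (ebasis R j) *: q1
     + dotv p2 (ebasis R j) *: q2 + dotv p3 (ebasis R j) *: q3)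
  = c * \sum_(j < n) dotv (S (ebasis R j)) (ebasis R j)
    + dotv p1 (S q1) + dotv p2 (S q2) + dotv p3 (S q3).
Proof.
have E : forall p q, \sum_(j < n) dotv (S (ebasis R j)) (dotv p (ebasis R j) *: q)
    = dotv p (S q).
  move=> p q; rewrite -sum_eb'; apply: eq_bigr => j _.
  by rewrite dotvZr Ssym (dotvC (ebasis R j)).
rewrite -!E mulr_sumr -!big_split /=; apply: eq_bigr => j _.
by rewrite !dotvDr !dotvZr.
Qed.

Section Alg.
Variables (R : realType) (n : nat) (a m : 'rV[R]_n) (L s u p0 p1 p2 p3 : R).
Hypotheses (haa : dotv a a = 1) (ham : dotv a m = 0) (hmm : dotv m m = L).

Lemma hma : dotv m a = 0.
Proof. by rewrite dotvC. Qed.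

Definition PP := p0 * (p0 - s * p1).
Definition QQ := p0 * p1.
Definition PP' := p1 * (p0 - s * p1) - s * p0 * p2.
Definition QQ' := p1 * p1 + p0 * p2.
Definition QQ'' := 3 * p1 * p2 + p0 * p3.
Definition Del := p0 * p0 * (PP + QQ' * L) - QQ * QQ * L.
Definition alp := (PP * PP + PP * QQ' * L - Del) / (PP * Del).
Definition bet := - QQ / Del.
Definition gam := - (p0 * p0 * p0 * p2) / (PP * Del).

Definition Gv (v : 'rV[R]_n) := PP *: v + (QQ * dotv m v + s * QQ * dotv a v) *: a
   + (QQ * dotv a v + QQ' * dotv m v) *: m.
Definition Mv (v : 'rV[R]_n) := PP^-1 *: v + (alp * dotv a v + bet * dotv m v) *: a
   + (bet * dotv a v + gam * dotv m v) *: m.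
Definition hv (v : 'rV[R]_n) := v - dotv a v *: a.
Definition Cv (v z : 'rV[R]_n) := (2 * u)^-1 *: (PP' *: ((dotv v z - dotv a v * dotv a z) *: m
   + dotv m v *: hv z + dotv m z *: hv v) + (QQ'' * dotv m v * dotv m z) *: m).

Ltac expd := repeat progress rewrite ?dotvDl ?dotvDr ?dotvZl ?dotvZr ?dotvBl ?dotvBr ?dotvNl ?dotvNr
  ?haa ?ham ?hmm ?hma.

Lemma Mv_sym p q : dotv (Mv p) q = dotv p (Mv q).
Proof. rewrite /Mv; expd; rewrite (dotvC p a) (dotvC p m); ring. Qed.

Lemma Gv_sym p q : dotv (Gv p) q = dotv p (Gv q).
Proof. rewrite /Gv; expd; rewrite (dotvC p a) (dotvC p m); ring. Qed.

Lemma GvMv p q : PP != 0 -> Del != 0 -> dotv (Gv p) (Mv q) = dotv p q.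
Proof.
move=> P0 D0; rewrite /Gv /Mv; expd; rewrite (dotvC p a) (dotvC p m).
move: P0 D0; rewrite /alp /bet /gam /Del /PP /QQ /QQ' => P0 D0.
have /andP[h0 h1] : (p0 != 0) && (p0 - s * p1 != 0) by move: P0; rewrite mulf_eq0 negb_or.
by field; rewrite D0 h0 h1.
Qed.


Lemma Cv_form v z : Cv v z = (PP' * dotv m v / (2 * u)) *: z
  + dotv (hv v) z *: ((PP' / (2 * u)) *: m)
  + dotv a z *: ((- PP' * dotv m v / (2 * u)) *: a)
  + dotv m z *: ((2 * u)^-1 *: (PP' *: hv v + (QQ'' * dotv m v) *: m)).
Proof.
rewrite /Cv {1 3}/hv dotvBl dotvZl; apply/rowP => k; rewrite !mxE /hv ?mxE; ring.
Qed.

Lemma Mv_form z : Mv z = PP^-1 *: z + dotv a z *: (alp *: a + bet *: m)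
  + dotv m z *: (bet *: a + gam *: m) + dotv 0 z *: 0.
Proof. rewrite /Mv dotv0l scale0r addr0; apply/rowP => k; rewrite !mxE; ring. Qed.

Lemma trM : \sum_(j < n) dotv (Mv (ebasis R j)) (ebasis R j) = PP^-1 * n%:R + alp + gam * L.
Proof.
rewrite (eq_bigr (fun j => dotv (id (ebasis R j)) (Mv (ebasis R j)))); last by move=> j _; rewrite dotvC.
rewrite (eq_bigr (fun j => dotv (id (ebasis R j)) (PP^-1 *: ebasis R j
   + dotv a (ebasis R j) *: (alp *: a + bet *: m)
   + dotv m (ebasis R j) *: (bet *: a + gam *: m) + dotv 0 (ebasis R j) *: 0))); last first.
  by move=> j _; rewrite Mv_form.
rewrite (@trace3 R n id) // (eq_bigr (fun j => dotv (ebasis R j) (ebasis R j))) // sum_eb_trace.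
expd; rewrite dotv0l; ring.
Qed.

Definition lam := (2 * u)^-1 * (PP' * ((n.+1)%:R / PP + 3 * gam * L) + QQ'' * L * (PP^-1 + gam * L)).

Lemma Itrace v : PP != 0 -> u != 0 -> \sum_(j < n) dotv (Mv (ebasis R j)) (Cv v (ebasis R j)) = lam * dotv m v.
Proof.
move=> P0 u0.
rewrite (eq_bigr (fun j => dotv (Mv (ebasis R j)) ((PP' * dotv m v / (2 * u)) *: ebasis R j
  + dotv (hv v) (ebasis R j) *: ((PP' / (2 * u)) *: m)
  + dotv a (ebasis R j) *: ((- PP' * dotv m v / (2 * u)) *: a)
  + dotv m (ebasis R j) *: ((2 * u)^-1 *: (PP' *: hv v + (QQ'' * dotv m v) *: m))))); last first.
  by move=> j _; rewrite Cv_form.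
rewrite trace3; last exact: Mv_sym.
rewrite trM /Mv /hv /lam; expd.
rewrite (dotvC v a) (dotvC v m).
have -> : (n.+1)%:R = n%:R + 1 :> R by rewrite mulrSr.
by field; rewrite P0 u0.
Qed.

Lemma mMm : dotv m (Mv m) = L * (PP^-1 + gam * L).
Proof. rewrite /Mv; expd; ring. Qed.

Lemma Gquad c d : dotv (c *: a + d *: m) (Gv (c *: a + d *: m))
  = c * c * (p0 * p0) + 2 * c * d * (QQ * L) + d * d * (L * (PP + QQ' * L)).
Proof. rewrite /Gv; expd; rewrite /PP /QQ; ring. Qed.

End Alg.

Section Spec.
Variables (R : realType) (n : nat) (x : 'rV[R]_n) (psi : nat -> R -> R) (w : 'rV[R]_n).
Hypothesis w0 : w != 0.

Definition aa := (enorm w)^-1 *: w.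
Definition mm := x - sf x w *: aa.
Definition LL := dotv x x - sf x w ^+ 2.

Lemma u0 : enorm w != 0.
Proof. by rewrite gt_eqF // enorm_gt0. Qed.

Lemma dotww : dotv w w = enorm w * enorm w.
Proof. by rewrite -expr2 enorm_sqr. Qed.

Ltac expd2 := repeat progress rewrite ?dotvDl ?dotvDr ?dotvZl ?dotvZr ?dotvBl ?dotvBr ?dotvNl ?dotvNr.

Lemma haa : dotv aa aa = 1.
Proof. rewrite /aa; expd2; rewrite dotww; have := u0; by move=> h; field. Qed.

Lemma ham : dotv aa mm = 0.
Proof.
rewrite /mm /aa /sf; expd2; rewrite dotww (dotvC w x); have := u0; by move=> h; field.
Qed.

Lemma hmm : dotv mm mm = LL.
Proof.
rewrite /mm /aa /LL /sf; expd2; rewrite dotww (dotvC w x); have := u0; by move=> h; field.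
Qed.

Lemma G_eq v z : G x psi w v z
  = dotv (Gv aa mm (sf x w) (psi 0 (sf x w)) (psi 1 (sf x w)) (psi 2 (sf x w)) v) z.
Proof.
rewrite /G /Gv /mm /aa /PP /QQ /QQ' /=; expd2; have := u0; by move=> h; field.
Qed.

Lemma C3_eq v z t : C3 x psi w v z t
  = dotv (Cv aa mm (sf x w) (enorm w) (psi 0 (sf x w)) (psi 1 (sf x w)) (psi 2 (sf x w))
       (psi 3 (sf x w)) v z) t.
Proof.
rewrite /C3 /Cv /hv /mm /aa /PP' /QQ'' /=; expd2; have := u0; by move=> h; field.
Qed.

End Spec.

Lemma isd_cont (R : realType) (f : R -> R) (t d : R) : is_derive t 1 f d -> {for t, continuous f}.
Proof.
by case=> /derivable1_diffP H _; apply: differentiable_continuous.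
Qed.

Lemma isdq (R : realType) (f : R -> R) (t v d d' : R) : is_derive t v f d -> d = d' -> is_derive t v f d'.
Proof. by move=> H <-. Qed.

Section MVTsig.
Variables (R : realType) (r : R) (psi : nat -> R -> R) (b eps : R).
Hypotheses (heps : eps * eps = 1) (hb : 0 <= b) (hbr : b < r).
Hypothesis Hder : forall t, b <= t <= r -> forall k,
  is_derive (eps * t) 1 (psi k) (psi k.+1 (eps * t)).
Hypothesis Hrho : forall t, b < t < r ->
  0 < psi 0 (eps * t) * (psi 0 (eps * t) - eps * t * psi 1 (eps * t) + (r ^+ 2 - t ^+ 2) * psi 2 (eps * t)).
Hypothesis Hp0 : forall t, b < t < r -> 0 < psi 0 (eps * t).

Let sig t := psi 0 (eps * t) - eps * t * psi 1 (eps * t).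
Let E t := sig t * Num.sqrt (r ^+ 2 - t * t).

Lemma isd_sig t : b <= t <= r -> is_derive t 1 sig (- t * psi 2 (eps * t)).
Proof.
move=> ht.
have Hi : is_derive t 1 (fun t : R => eps * t) (eps * 1).
  eapply isdq; first by apply: isdM.
  by rewrite /= mulr0 addr0.
have C0 := isd_comp (f := fun t => eps * t) (Hder ht 0) Hi.
have C1 := isd_comp (f := fun t => eps * t) (Hder ht 1) Hi.
rewrite /sig; eapply isdq.
  exact: (isdB C0 (isdM Hi C1)).
rewrite /=; have -> : (- t * psi 2 (eps * t)) = - t * psi 2 (eps * t) * (eps * eps) by rewrite heps mulr1.
ring.
Qed.


Lemma isd_q (t : R) : is_derive t 1 (fun t : R => r ^+ 2 - t * t) (- (t + t)).
Proof.
eapply isdq; first exact: (isdB (isdC _ _ _) (isdM (is_derive_id t 1) (is_derive_id t 1))).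
by rewrite /= sub0r mulr1.
Qed.

Lemma qcont (t : R) : {for t, continuous (fun t : R => Num.sqrt (r ^+ 2 - t * t))}.
Proof.
apply: (continuous_comp (f := fun t : R => r ^+ 2 - t * t)); first exact: isd_cont (isd_q t).
exact: sqrt_continuous.
Qed.

Lemma isd_E (t : R) : b < t < r ->
  is_derive t 1 E (- t * (psi 2 (eps * t) * (Num.sqrt (r ^+ 2 - t * t) * Num.sqrt (r ^+ 2 - t * t)) + sig t)
                    / Num.sqrt (r ^+ 2 - t * t)).
Proof.
move=> /andP[bt tr].
have ht : b <= t <= r by rewrite !ltW.
have qp : 0 < r ^+ 2 - t * t.
  have -> : r ^+ 2 - t * t = (r - t) * (r + t) by ring.
  have t0 : 0 < t := le_lt_trans hb bt.
  by rewrite mulr_gt0 // ?subr_gt0 // addr_gt0 // (lt_trans t0 tr).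
have sq0 : Num.sqrt (r ^+ 2 - t * t) != 0 by rewrite gt_eqF // sqrtr_gt0.
have S := isd_comp (f := fun t : R => r ^+ 2 - t * t) (is_derive1_sqrt qp) (isd_q t).
rewrite /E; eapply isdq; first exact: (isdM (isd_sig ht) S).
by rewrite /=; field.
Qed.

Lemma sig_pos : 0 < sig b.
Proof.
have Ec : {within `[b, r], continuous E}.
  apply: continuous_in_subspaceT => t; rewrite inE /= in_itv /= => ht.
  apply: continuousM; first exact: isd_cont (isd_sig ht).
  exact: qcont.
have [c cbr Hc] := MVT hbr isd_E Ec.
move: cbr; rewrite in_itv /= => /andP[bc cr].
have c0 : 0 < c := le_lt_trans hb bc.
have qp : 0 < r ^+ 2 - c * c.
  have -> : r ^+ 2 - c * c = (r - c) * (r + c) by ring.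
  by rewrite mulr_gt0 // ?subr_gt0 // addr_gt0 // (lt_trans c0 cr).
have qb : 0 < r ^+ 2 - b * b.
  have -> : r ^+ 2 - b * b = (r - b) * (r + b) by ring.
  rewrite mulr_gt0 // ?subr_gt0 //.
  by rewrite ltr_wpDr // (le_lt_trans hb hbr).
have Er : E r = 0 by rewrite /E expr2 subrr sqrtr0 mulr0.
have bcr : b < c < r by rewrite bc cr.
have pos : 0 < psi 2 (eps * c) * (r ^+ 2 - c * c) + sig c.
  have := Hrho bcr; rewrite (pmulr_rgt0 _ (Hp0 bcr)) => h.
  by rewrite /sig -[c * c]expr2 addrC (mulrC (psi 2 _)).
have S0 : 0 < Num.sqrt (r ^+ 2 - c * c) by rewrite sqrtr_gt0.
have Hneg : - c * (psi 2 (eps * c) * (Num.sqrt (r ^+ 2 - c * c) * Num.sqrt (r ^+ 2 - c * c)) + sig c)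
    / Num.sqrt (r ^+ 2 - c * c) * (r - b) < 0.
  rewrite -expr2 sqr_sqrtr ?ltW //.
  rewrite pmulr_llt0 ?subr_gt0 // pmulr_llt0 ?invr_gt0 //.
  by rewrite mulNr oppr_lt0 mulr_gt0.
have Eb : 0 < E b by move: Hc Hneg; rewrite Er sub0r => <-; rewrite oppr_lt0.
move: Eb; rewrite /E pmulr_lgt0 //.
by rewrite sqrtr_gt0.
Qed.

End MVTsig.

Lemma Del_pos_abs (R : realType) (n : nat) (a m : 'rV[R]_n) (L s p0 p1 p2 : R) :
  dotv a a = 1 -> dotv a m = 0 -> dotv m m = L -> 0 < L ->
  (forall v, v != 0 -> 0 < dotv v (Gv a m s p0 p1 p2 v)) -> 0 < Del L s p0 p1 p2.
Proof.
move=> Haa Ham Hmm Lp Hd.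
have m0 : m != 0.
  apply/eqP => m0; move: Hmm; rewrite m0 dotv0l => L0.
  by move: Lp; rewrite -L0 ltxx.
have cpos : 0 < L * (PP s p0 p1 + QQ' p0 p1 p2 * L).
  have := Hd m m0.
  have G1 := @Gquad R n a m L s p0 p1 p2 Haa Ham Hmm 0 1.
  rewrite scale0r add0r scale1r in G1.
  rewrite G1.
  have -> : 0 * 0 * (p0 * p0) + 2 * 0 * 1 * (QQ p0 p1 * L) +
     1 * 1 * (L * (PP s p0 p1 + QQ' p0 p1 p2 * L)) = L * (PP s p0 p1 + QQ' p0 p1 p2 * L) by ring.
  by [].
set c := L * (PP s p0 p1 + QQ' p0 p1 p2 * L).
set d := - (QQ p0 p1 * L).
have v0 : c *: a + d *: m != 0.
  apply/eqP => h.
  have : dotv a (c *: a + d *: m) = c by rewrite dotvDr !dotvZr Haa Ham mulr1 mulr0 addr0.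
  rewrite h dotv0r => c0; have := cpos; rewrite -/c. by rewrite -c0 ltxx.
have := Hd _ v0; rewrite (@Gquad R n a m L s p0 p1 p2 Haa Ham Hmm).
have -> : c * c * (p0 * p0) + 2 * c * d * (QQ p0 p1 * L) + d * d * (L * (PP s p0 p1 + QQ' p0 p1 p2 * L))
   = (c * L) * Del L s p0 p1 p2 by rewrite /d /c /Del; ring.
by rewrite pmulr_rgt0 // mulr_gt0.
Qed.

Lemma andP_intro (a b : bool) : a -> b -> a && b.
Proof. by move=> -> ->. Qed.

Section Final.
Variables (R : realType) (n : nat) (phi : R -> R -> R) (D : set (R * R)) (x : 'rV[R]_n).
Hypothesis Hsm : smooth_on D (fun p : R * R => phi p.1 p.2).
Hypothesis HD : forall w : 'rV[R]_n, w != 0 -> D (enorm x, dotv x w / enorm w).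
Hypothesis Hpos : forall w : 'rV[R]_n, w != 0 -> 0 < sph_metric phi x w.
Hypothesis Hdef : forall w v : 'rV[R]_n, w != 0 -> v != 0 ->
  0 < \sum_(i < n) \sum_(j < n) fund_tensor (sph_metric phi) x w i j * v ord0 i * v ord0 j.

Local Notation psi := (psiF phi x).
Definition GvW w := Gv (aa w) (mm x w) (sf x w) (psi 0 (sf x w)) (psi 1 (sf x w)) (psi 2 (sf x w)).

Lemma quadG (w v : 'rV[R]_n) : w != 0 ->
  \sum_(i < n) \sum_(j < n) fund_tensor (sph_metric phi) x w i j * v ord0 i * v ord0 j
  = dotv v (GvW w v).
Proof.
move=> w0.
rewrite -sum_eb; apply: eq_bigr => i _.
rewrite (eq_bigr (fun j => v ord0 i * (dotv (GvW w (ebasis R i)) (ebasis R j) * dotv v (ebasis R j)))); last first.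
  by move=> j _; rewrite (fund_eq Hsm HD) // (G_eq _ _ w0) -/(GvW w _) [dotv v (ebasis R j)]dotv_ebr; ring.
by rewrite -mulr_sumr sum_eb' /GvW Gv_sym dotv_ebr.
Qed.

Lemma p0_pos (w : 'rV[R]_n) : w != 0 -> 0 < psi 0 (sf x w).
Proof.
move=> w0; have := Hpos w0; rewrite /sph_metric psiF0 pmulr_rgt0 //.
exact: enorm_gt0.
Qed.

Lemma Del_pos (w : 'rV[R]_n) : w != 0 -> 0 < LL x w ->
  0 < Del (LL x w) (sf x w) (psi 0 (sf x w)) (psi 1 (sf x w)) (psi 2 (sf x w)).
Proof.
move=> w0 Lp; apply: (Del_pos_abs (haa w0) (ham x w0) (hmm x w0) Lp) => v v0.
by rewrite -/(GvW w v) -quadG //; apply: Hdef.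
Qed.

Lemma realize (y : 'rV[R]_n) (tau : R) : y != 0 -> 0 < LL x y -> tau ^+ 2 <= dotv x x ->
  exists w : 'rV[R]_n, [/\ w != 0, sf x w = tau & LL x w = dotv x x - tau ^+ 2].
Proof.
move=> y0 Lp tr.
have u0 : enorm y != 0 by rewrite gt_eqF // enorm_gt0.
have das : dotv (aa y) x = sf x y by rewrite /aa /sf dotvZl dotvC mulrC.
have r2pos : 0 < dotv x x.
  by move: Lp; rewrite /LL subr_gt0 => h; apply: le_lt_trans h; rewrite sqr_ge0.
have r20 : dotv x x != 0 by rewrite gt_eqF.
have L0 : LL x y != 0 by rewrite gt_eqF.
set p := aa y - (sf x y / dotv x x) *: x.
have dpx : dotv p x = 0 by rewrite /p dotvBl dotvZl das; field.
have dxp : dotv x p = 0 by rewrite dotvC.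
have dpp : dotv p p = LL x y / dotv x x.
  rewrite /p !dotvBl !dotvBr !dotvZl !dotvZr (dotww y) (dotvC y x) /LL /sf; by field; rewrite ?u0 ?r20.
have cge : 0 <= (dotv x x - tau ^+ 2) / LL x y by apply: divr_ge0; [rewrite subr_ge0 | exact: ltW].
set c := Num.sqrt ((dotv x x - tau ^+ 2) / LL x y).
have cc : c * c = (dotv x x - tau ^+ 2) / LL x y by rewrite -expr2 sqr_sqrtr.
set w := (tau / dotv x x) *: x + c *: p.
have dxw : dotv x w = tau by rewrite /w dotvDr !dotvZr dxp mulr0 addr0; field.
have dww : dotv w w = 1.
  rewrite /w !dotvDl !dotvDr !dotvZl !dotvZr dxp dpx dpp.
  have -> : c * (c * (LL x y / dotv x x)) = (c * c) * (LL x y / dotv x x) by ring.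
  by rewrite cc; field; rewrite ?r20 ?L0.
have ew : enorm w = 1 by rewrite /enorm dww sqrtr1.
have w0 : w != 0 by apply/eqP => w0; move: dww; rewrite w0 dotv0l => /eqP; rewrite eq_sym oner_eq0.
have sw : sf x w = tau by rewrite /sf ew divr1.
by exists w; split => //; rewrite /LL sw.
Qed.

Lemma sig_y (y : 'rV[R]_n) : y != 0 -> 0 < LL x y ->
  0 < psi 0 (sf x y) - sf x y * psi 1 (sf x y).
Proof.
move=> y0 Lp.
set s0 := sf x y.
pose eps : R := if 0 <= s0 then 1 else -1.
pose b := `|s0|.
have heps : eps * eps = 1 by rewrite /eps; case: ifP => _; rewrite ?mulr1 ?mulrNN ?mulr1.
have hsb : eps * b = s0.
  rewrite /eps /b; case: ifP => h; first by rewrite mul1r ger0_norm.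
  by rewrite ltr0_norm ?mulrNN ?mul1r // ltNge h.
have r2 : enorm x ^+ 2 = dotv x x by rewrite enorm_sqr.
have hb : 0 <= b by rewrite /b normr_ge0.
have b2 : b ^+ 2 = s0 ^+ 2 by rewrite /b real_normK // num_real.
have hbr : b < enorm x.
  case: (ltP b (enorm x)) => // rb; exfalso.
  have : enorm x ^+ 2 - b ^+ 2 <= 0.
    have -> : enorm x ^+ 2 - b ^+ 2 = (enorm x - b) * (enorm x + b) by ring.
    by apply: mulr_le0_ge0; [rewrite subr_le0 | rewrite addr_ge0 // enorm_ge0].
  by rewrite r2 b2 -/(LL x y) leNgt Lp.
have real t : b <= t <= enorm x -> exists w : 'rV[R]_n,
    [/\ w != 0, sf x w = eps * t & LL x w = enorm x ^+ 2 - t ^+ 2].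
  move=> /andP[bt tr].
  have t0 : 0 <= t := le_trans hb bt.
  have et : (eps * t) ^+ 2 = t ^+ 2 by rewrite exprMn expr2 heps mul1r.
  have [w [w0 sw Lw]] : exists w : 'rV[R]_n, [/\ w != 0, sf x w = eps * t & LL x w = dotv x x - (eps * t) ^+ 2].
    apply: (realize y0 Lp); rewrite et -r2.
    by rewrite lerXn2r // ?nnegrE ?enorm_ge0.
  by exists w; split => //; rewrite Lw et r2.
have := @sig_pos R (enorm x) psi b eps heps hb hbr.
rewrite hsb; apply.
- move=> t ht k; have [w [w0 sw _]] := real t ht.
  by rewrite -sw; apply: (Hpsi Hsm HD).
- move=> t /andP[bt tr]; have [w [w0 sw Lw]] := real t (andP_intro (ltW bt) (ltW tr)).
  have Lp' : 0 < LL x w.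
    rewrite Lw.
    have t0 : 0 < t := le_lt_trans hb bt.
    have -> : enorm x ^+ 2 - t ^+ 2 = (enorm x - t) * (enorm x + t) by ring.
    by rewrite mulr_gt0 // ?subr_gt0 // addr_gt0 // (lt_trans t0 tr).
  have := Del_pos w0 Lp'; have := p0_pos w0; rewrite sw Lw.
  move=> p0p.
  have -> : Del (enorm x ^+ 2 - t ^+ 2) (eps * t) (psi 0 (eps * t)) (psi 1 (eps * t)) (psi 2 (eps * t))
    = psi 0 (eps * t) * (psi 0 (eps * t) * (psi 0 (eps * t) * (psi 0 (eps * t) - eps * t * psi 1 (eps * t)
        + (enorm x ^+ 2 - t ^+ 2) * psi 2 (eps * t)))) by rewrite /Del /PP /QQ /QQ'; ring.
  by rewrite !pmulr_rgt0.
- move=> t /andP[bt tr]; have [w [w0 sw _]] := real t (andP_intro (ltW bt) (ltW tr)).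
  by rewrite -sw; apply: p0_pos.
Qed.

Lemma gmat_eq (y : 'rV[R]_n) : y != 0 ->
  gmat (sph_metric phi) x y = \matrix_(i, j) dotv (GvW y (ebasis R i)) (ebasis R j).
Proof.
by move=> y0; apply/matrixP => i j; rewrite !mxE (fund_eq Hsm HD) // (G_eq _ _ y0).
Qed.

Lemma mean_cartan0 (y : 'rV[R]_n) : y != 0 -> LL x y = 0 ->
  forall i, mean_cartan (sph_metric phi) x y i = 0.
Proof.
move=> y0 L0 i.
have m0 : mm x y = 0 by apply: dotv_eq0; rewrite (hmm x y0).
rewrite /mean_cartan big1 // => j _; rewrite big1 // => k _.
rewrite (cartan_eq Hsm HD) // (C3_eq _ _ y0) m0 /Cv.
by rewrite !dotv0l ?mul0r ?mulr0 ?scale0r ?scaler0 ?addr0 ?scaler0 ?dotv0l ?mulr0.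
Qed.

Definition MvW (y : 'rV[R]_n) := Mv (aa y) (mm x y) (LL x y) (sf x y)
  (psi 0 (sf x y)) (psi 1 (sf x y)) (psi 2 (sf x y)).

Lemma PP_neq0 (y : 'rV[R]_n) : y != 0 -> 0 < LL x y ->
  PP (sf x y) (psi 0 (sf x y)) (psi 1 (sf x y)) != 0.
Proof.
move=> y0 Lp; rewrite /PP gt_eqF // mulr_gt0 //; first exact: p0_pos.
exact: sig_y.
Qed.

Lemma ginv_eq (y : 'rV[R]_n) : y != 0 -> 0 < LL x y ->
  ginv (sph_metric phi) x y = \matrix_(i, j) dotv (MvW y (ebasis R i)) (ebasis R j).
Proof.
move=> y0 Lp.
have H : gmat (sph_metric phi) x y *m \matrix_(i, j) dotv (MvW y (ebasis R i)) (ebasis R j) = 1%:M.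
  rewrite gmat_eq //; apply/matrixP => i j; rewrite !mxE.
  rewrite (eq_bigr (fun k => dotv (GvW y (ebasis R i)) (ebasis R k) * dotv (ebasis R k) (MvW y (ebasis R j)))); last first.
    by move=> k _; rewrite !mxE /MvW Mv_sym.
  rewrite sum_eb /GvW /MvW GvMv ?(haa y0) ?(ham x y0) ?(hmm x y0) //; last first.
  - by rewrite gt_eqF // Del_pos.
  - exact: PP_neq0.
  rewrite dotv_ebr /ebasis !mxE eqxx /= eq_sym.
  by case: (i == j).
have [gU _] := mulmx1_unit H.
by rewrite /ginv -[RHS](mulKmx gU) H mulmx1.
Qed.

Definition lamW (y : 'rV[R]_n) := lam n (LL x y) (sf x y) (enorm y)
  (psi 0 (sf x y)) (psi 1 (sf x y)) (psi 2 (sf x y)) (psi 3 (sf x y)).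

Lemma mean_cartan_eq (y : 'rV[R]_n) : y != 0 -> 0 < LL x y -> forall i,
  mean_cartan (sph_metric phi) x y i = lamW y * dotv (mm x y) (ebasis R i).
Proof.
move=> y0 Lp i.
rewrite /mean_cartan ginv_eq //.
rewrite (eq_bigr (fun j => dotv (MvW y (ebasis R j)) (Cv (aa y) (mm x y) (sf x y) (enorm y)
   (psi 0 (sf x y)) (psi 1 (sf x y)) (psi 2 (sf x y)) (psi 3 (sf x y)) (ebasis R i) (ebasis R j)))).
  rewrite /MvW Itrace ?(haa y0) ?(ham x y0) ?(hmm x y0) //.
  - exact: PP_neq0.
  - by rewrite gt_eqF // enorm_gt0.
move=> j _; rewrite -sum_eb'; apply: eq_bigr => k _.
by rewrite !mxE (cartan_eq Hsm HD) // (C3_eq _ _ y0).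
Qed.

Lemma norm_sq (y : 'rV[R]_n) : y != 0 -> 0 < LL x y ->
  \sum_(i < n) \sum_(j < n) ginv (sph_metric phi) x y i j
     * mean_cartan (sph_metric phi) x y i * mean_cartan (sph_metric phi) x y j
  = lamW y ^+ 2 * dotv (mm x y) (MvW y (mm x y)).
Proof.
move=> y0 Lp.
rewrite ginv_eq // -sum_eb mulr_sumr; apply: eq_bigr => i _.
rewrite (eq_bigr (fun j => (lamW y ^+ 2 * dotv (mm x y) (ebasis R i)) *
   (dotv (MvW y (ebasis R i)) (ebasis R j) * dotv (mm x y) (ebasis R j)))); last first.
  by move=> j _; rewrite !mxE !mean_cartan_eq //; ring.
by rewrite -mulr_sumr sum_eb' /MvW Mv_sym; ring.
Qed.

Lemma main (y : 'rV[R]_n) : y != 0 ->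
    let u := enorm y in
    let r := enorm x in
    let s := sf x y in
    let p := psi 0 s in
    let ps := psi 1 s in
    let pss := psi 2 s in
    let psss := psi 3 s in
    let sigma1 := p - s * ps in
    let rho := p * (sigma1 + (r ^+ 2 - s ^+ 2) * pss) in
    norm_mean_cartan (sph_metric phi) x y =
      `| ((n.+1)%:R * (sigma1 * ps - s * p * pss)
             * (sigma1 + (r ^+ 2 - s ^+ 2) * pss)
          + (r ^+ 2 - s ^+ 2) * (sigma1 * psss + 3 * s * pss ^+ 2) * p)
         / (2 * u * sigma1 * rho) |
      * Num.sqrt ((r ^+ 2 - s ^+ 2) / rho).
Proof.
move=> y0; cbv zeta.
rewrite enorm_sqr -/(LL x y).
have : 0 <= LL x y by rewrite -(hmm x y0) dotv_ge0.
rewrite le_eqVlt => /orP[/eqP L0 | Lp].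
  rewrite -L0 /norm_mean_cartan big1 ?sqrtr0 ?mul0r ?sqrtr0 ?mulr0 // => i _.
  by rewrite big1 // => j _; rewrite !(mean_cartan0 y0) ?mulr0.
rewrite /norm_mean_cartan norm_sq // sqrtrM ?sqr_ge0 // sqrtr_sqr.
rewrite /MvW mMm ?(ham x y0) ?(hmm x y0) //.
have p0 := p0_pos y0; have sg := sig_y y0 Lp; have Dp := Del_pos y0 Lp.
have u0 : enorm y != 0 by rewrite gt_eqF // enorm_gt0.
move: p0 sg Dp u0 Lp; rewrite /lamW.
set s := sf x y; set L := LL x y.
set p0 := psi 0 s; set p1 := psi 1 s; set p2 := psi 2 s; set p3 := psi 3 s.
move=> p0p sgp Dp u0 Lp.
have rp : 0 < p0 - s * p1 + L * p2.
  move: Dp; rewrite /Del /PP /QQ /QQ'.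
  have -> : p0 * p0 * (p0 * (p0 - s * p1) + (p1 * p1 + p0 * p2) * L) - p0 * p1 * (p0 * p1) * L
     = p0 * p0 * (p0 * (p0 - s * p1 + L * p2)) by ring.
  by rewrite !pmulr_rgt0.
have h1 : p0 - s * p1 + L * p2 != 0 by rewrite gt_eqF.
have h2 : p0 != 0 by rewrite gt_eqF.
have h4 : p0 - s * p1 != 0 by rewrite gt_eqF.
have h3 : p0 * p0 * (p0 * (p0 - s * p1) + (p1 * p1 + p0 * p2) * L) - p0 * p1 * (p0 * p1) * L != 0.
  by move: Dp; rewrite /Del /PP /QQ /QQ' => Dp; rewrite gt_eqF.
have E1 : L * ((PP s p0 p1)^-1 + gam L s p0 p1 p2 * L) = L / (p0 * (p0 - s * p1 + L * p2)).
  by rewrite /gam /Del /PP /QQ /QQ'; field; rewrite h1 h2 h3 h4.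
have E2 : lam n L s (enorm y) p0 p1 p2 p3 =
  ((n.+1)%:R * ((p0 - s * p1) * p1 - s * p0 * p2) * (p0 - s * p1 + L * p2) +
    L * ((p0 - s * p1) * p3 + 3 * s * p2 ^+ 2) * p0) /
   (2 * enorm y * (p0 - s * p1) * (p0 * (p0 - s * p1 + L * p2))).
  rewrite /lam /gam /Del /PP /PP' /QQ /QQ' /QQ''.
  by field; rewrite h1 h2 h3 h4 u0.
by rewrite E1 E2.
Qed.

End Final.

Unset Implicit Arguments. Set Strict Implicit.

Theorem corollary1 (R : realType) (n : nat) (U : set 'rV[R]_n)
    (phi : R -> R -> R) :
  domain U ->
  (exists D : set (R * R),
      smooth_on D (fun p => phi p.1 p.2) /\
      (forall x y : 'rV[R]_n, U x -> y != 0 ->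
         D (enorm x, dotv x y / enorm y))) ->
  finsler_metric U (sph_metric phi) ->
  forall x y : 'rV[R]_n, U x -> y != 0 ->
    let u := enorm y in
    let r := enorm x in
    let s := dotv x y / enorm y in
    let p := phi r s in
    let ps := phi_s phi r s in
    let pss := phi_ss phi r s in
    let psss := phi_sss phi r s in
    let sigma1 := p - s * ps in
    let rho := p * (sigma1 + (r ^+ 2 - s ^+ 2) * pss) in
    norm_mean_cartan (sph_metric phi) x y =
      `| ((n.+1)%:R * (sigma1 * ps - s * p * pss)
             * (sigma1 + (r ^+ 2 - s ^+ 2) * pss)
          + (r ^+ 2 - s ^+ 2) * (sigma1 * psss + 3 * s * pss ^+ 2) * p)
         / (2 * u * sigma1 * rho) |
      * Num.sqrt ((r ^+ 2 - s ^+ 2) / rho).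
Proof.
move=> _ [D [Hsm HD]] [_ [Hpos [_ Hdef]]] x y Ux y0.
have HD' : forall w : 'rV[R]_n, w != 0 -> D (enorm x, dotv x w / enorm w).
  by move=> w w0; apply: HD.
have := main Hsm HD' (fun w w0 => Hpos x w Ux w0) (fun w v w0 v0 => Hdef x w v Ux w0 v0) y0.
cbv zeta.
rewrite -!psiF0 -!psiF1 -!psiF2 -!psiF3.
by [].
Qed.
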